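(* Let $(\Sigma_+,\Sigma_-,N_1,N_2,N_3)$ be a solution of the Wainwright–Hsu system satisfying the constraint, with $N_1=0$, $N_2,N_3>0$, such that $N_2=N_3$ and $\Sigma_-=0$ never hold simultaneously. Then $\lim_{\tau\to\infty}\Sigma_+=-1$, $\lim_{\tau\to\infty}\Sigma_-=0$ and $\lim_{\tau\to\infty}(N_2-N_3)=0$.
   Context: Wainwright–Hsu system: for functions $N_1,N_2,N_3,\Sigma_+,\Sigma_-$ of $\tau\in\mathbb{R}$ (prime denotes $d/d\tau$), $N_1'=(q-4\Sigma_+)N_1$, $N_2'=(q+2\Sigma_++2\sqrt3\Sigma_-)N_2$, $N_3'=(q+2\Sigma_+-2\sqrt3\Sigma_-)N_3$, $\Sigma_+'=-(2-q)\Sigma_+-3S_+$, $\Sigma_-'=-(2-q)\Sigma_--3S_-$, where $q=2(\Sigma_+^2+\Sigma_-^2)$, $S_+=\frac12[(N_2-N_3)^2-N_1(2N_1-N_2-N_3)]$, $S_-=\frac{\sqrt3}{2}(N_3-N_2)(N_1-N_2-N_3)$, together with the constraint $\Sigma_+^2+\Sigma_-^2+\frac34[N_1^2+N_2^2+N_3^2-2(N_1N_2+N_2N_3+N_1N_3)]=1$. Solutions exist for all $\tau\in\mathbb{R}$. *)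

(* Defs.v *)
From Stdlib Require Import Reals.
From Coquelicot Require Import Coquelicot.
Open Scope R_scope.

Definition WH_q (Sp Sm : R) : R := 2 * (Sp ^ 2 + Sm ^ 2).

Definition WH_Splus (N1 N2 N3 : R) : R :=
  / 2 * ((N2 - N3) ^ 2 - N1 * (2 * N1 - N2 - N3)).

Definition WH_Sminus (N1 N2 N3 : R) : R :=
  sqrt 3 / 2 * (N3 - N2) * (N1 - N2 - N3).

Definition WH_solution (N1 N2 N3 Sp Sm : R -> R) : Prop :=
  forall t : R,
    is_derive N1 t ((WH_q (Sp t) (Sm t) - 4 * Sp t) * N1 t) /\
    is_derive N2 t ((WH_q (Sp t) (Sm t) + 2 * Sp t + 2 * sqrt 3 * Sm t) * N2 t) /\
    is_derive N3 t ((WH_q (Sp t) (Sm t) + 2 * Sp t - 2 * sqrt 3 * Sm t) * N3 t) /\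
    is_derive Sp t (- (2 - WH_q (Sp t) (Sm t)) * Sp t
                    - 3 * WH_Splus (N1 t) (N2 t) (N3 t)) /\
    is_derive Sm t (- (2 - WH_q (Sp t) (Sm t)) * Sm t
                    - 3 * WH_Sminus (N1 t) (N2 t) (N3 t)).

Definition WH_constraint (N1 N2 N3 Sp Sm : R -> R) : Prop :=
  forall t : R,
    Sp t ^ 2 + Sm t ^ 2
    + 3 / 4 * (N1 t ^ 2 + N2 t ^ 2 + N3 t ^ 2
               - 2 * (N1 t * N2 t + N2 t * N3 t + N1 t * N3 t)) = 1.

(* Main.v *)
Require Import Defs.
From Stdlib Require Import Reals Lra Psatz Classical.
From Coquelicot Require Import Coquelicot.
Open Scope R_scope.

Lemma is_derive_eq (f : R -> R) x l l' : is_derive f x l -> l = l' -> is_derive f x l'.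
Proof. intros H ->; exact H. Qed.

Lemma d_mult (f g : R -> R) x df dg : is_derive f x df -> is_derive g x dg ->
  is_derive (fun t => f t * g t) x (df * g x + f x * dg).
Proof. intros H1 H2. exact (is_derive_mult f g x df dg H1 H2 Rmult_comm). Qed.

Lemma d_exp (f : R -> R) x df : is_derive f x df ->
  is_derive (fun t => exp (f t)) x (df * exp (f x)).
Proof. intros H. exact (is_derive_comp exp f x _ _ (is_derive_exp (f x)) H). Qed.

Lemma incr_lb (f df : R -> R) L a b : (forall t, is_derive f t (df t)) -> a <= b ->
  (forall t, a <= t <= b -> L <= df t) -> L * (b - a) <= f b - f a.
Proof.
  intros Hd Hab HL.
  destruct (MVT_gen f a b df) as [c [Hc He]].
  - intros; apply Hd.
  - intros; apply continuity_pt_filterlim. apply (ex_derive_continuous (K:=R_AbsRing) (V:=R_NormedModule)).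
    eexists; apply Hd.
  - rewrite Rmin_left in Hc by lra. rewrite Rmax_right in Hc by lra.
    rewrite He. apply Rmult_le_compat_r; [lra|]. apply HL; lra.
Qed.
Lemma keyineq sp sm n2 n3 eps m a : 0 < n2 -> 0 < n3 -> 0 < eps -> 0 < m ->
  m <= n2 + n3 -> sp^2 + sm^2 + 3/4*(n2-n3)^2 = 1 -> -1 + eps <= sp -> sp <= a -> a < 1 ->
  2*((1-a)*eps) <=
  ((( -3/2*(n2-n3)^2*sm - 3*sqrt 3/2*(n2-n3)*(n2+n3)) * (n2-n3)
     + sm*((2 - 3/2*(n2-n3)^2 + 2*sp + 2*sqrt 3*sm)*n2 - (2 - 3/2*(n2-n3)^2 + 2*sp - 2*sqrt 3*sm)*n3))*(n2+n3)
    - sm*(n2-n3)*((2 - 3/2*(n2-n3)^2 + 2*sp + 2*sqrt 3*sm)*n2 + (2 - 3/2*(n2-n3)^2 + 2*sp - 2*sqrt 3*sm)*n3))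
   / (n2+n3)^2
  - (2*(6 + 3/m + 4/m^2)/(3*eps)) * (-3/2*(n2-n3)^2*(1+sp)).
Proof.
  intros h2 h3 he hm hs hc hl ha ha1.
  set (d := n2 - n3) in *. set (s := n2 + n3) in *. set (r := sqrt 3).
  assert (hr1 : 1 <= r). { unfold r; rewrite <- sqrt_1; apply sqrt_le_1_alt; lra. }
  assert (hr2 : r <= 2). { unfold r; rewrite <- (sqrt_pow2 2) by lra; apply sqrt_le_1_alt; lra. }
  assert (hs0 : 0 < s) by lra.
  set (u := / s).
  assert (hu : 0 < u) by (apply Rinv_0_lt_compat; lra).
  assert (hum : u <= / m) by (apply Rinv_le_contravar; lra).
  assert (hsd : s = n2 + n3) by reflexivity.
  assert (hdd : d = n2 - n3) by reflexivity.
  assert (Hv : (((-3/2*d^2*sm - 3*r/2*d*s) * d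
     + sm*((2 - 3/2*d^2 + 2*sp + 2*r*sm)*n2 - (2 - 3/2*d^2 + 2*sp - 2*r*sm)*n3))*s
    - sm*d*((2 - 3/2*d^2 + 2*sp + 2*r*sm)*n2 + (2 - 3/2*d^2 + 2*sp - 2*r*sm)*n3))
   / s^2 = 2*r*sm^2 - 3/2*r*d^2 - 3/2*d^2*(d*sm)*u - 2*r*(sm^2*d^2)*u^2).
  { unfold u. rewrite hsd, hdd. field. lra. }
  assert (Hr : r*sm^2 = r*(1-sp^2) - 3/4*r*d^2) by (replace (sm^2) with (1 - sp^2 - 3/4*d^2) by lra; ring).
  rewrite Hv. clear Hv.
  assert (hsm : sm^2 <= 1) by nra.
  assert (hd : d^2 <= 4/3) by nra.
  assert (hdsm : -2 <= d*sm <= 2) by nra.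
  set (B := 6 + 3/m + 4/m^2).
  assert (t1 : 2*((1-a)*eps) <= 2*r*(1-sp^2)).
  { assert ((1-a)*eps <= (1-sp)*(1+sp)) by (apply Rmult_le_compat; lra). nra. }
  assert (t2 : 3*r*d^2 <= 6*d^2) by nra.
  assert (t3 : 3/2*d^2*(d*sm)*u <= 3*d^2/m).
  { assert (d*sm*u <= 2 / m). { unfold Rdiv. nra. } 
    assert (0 <= d^2) by nra. nra. }
  assert (t4 : 2*r*(sm^2*d^2)*u^2 <= 4*d^2/m^2).
  { assert (u^2 <= / m^2). { unfold u. rewrite pow_inv.
       apply Rinv_le_contravar. nra. apply pow_incr. lra. } 
    assert (0 <= d^2) by nra. assert (0 <= sm^2) by nra. 
    assert (sm^2*d^2 <= d^2) by nra.
    assert (sm^2*d^2*u^2 <= d^2 / m^2). { unfold Rdiv. apply Rmult_le_compat; nra. }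
    assert (0 <= sm^2*d^2*u^2) by nra. nra. }
  assert (t5 : (2*B/(3*eps)) * (-3/2*d^2*(1+sp)) <= - B*d^2).
  { assert (0 < B) by (unfold B; assert (0 < /m) by (apply Rinv_0_lt_compat; lra);
       assert (0 < /m^2) by (apply Rinv_0_lt_compat; nra); unfold Rdiv; nra).
    replace ((2*B/(3*eps)) * (-3/2*d^2*(1+sp))) with (- B*d^2*((1+sp)/eps)) by (field; lra).
    assert (1 <= (1+sp)/eps) by (apply (Rmult_le_reg_r eps); [lra|]; field_simplify; lra).
    assert (0 <= B*d^2) by nra. nra. }
  assert (HB : B*d^2 = 6*d^2 + 3*d^2/m + 4*d^2/m^2) by (unfold B; field; lra).
  lra.
Qed.

Lemma d_minus (f g : R -> R) x df dg : is_derive f x df -> is_derive g x dg ->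
  is_derive (fun t => f t - g t) x (df - dg).
Proof. intros H1 H2. exact (is_derive_minus f g x df dg H1 H2). Qed.
Lemma d_plus (f g : R -> R) x df dg : is_derive f x df -> is_derive g x dg ->
  is_derive (fun t => f t + g t) x (df + dg).
Proof. intros H1 H2. exact (is_derive_plus f g x df dg H1 H2). Qed.
Lemma d_opp (f : R -> R) x df : is_derive f x df ->
  is_derive (fun t => - f t) x (- df).
Proof. intros H1. exact (is_derive_opp f x df H1). Qed.

Lemma exp_le a b : a <= b -> exp a <= exp b.
Proof. intros [H|H]. apply Rlt_le, exp_increasing, H. subst; lra. Qed.

Ltac req := match goal with |- ?a = ?b => change (@eq R a b) end.

Lemma core (N2 N3 Sp Sm : R -> R) eps :
 (forall t, is_derive N2 t ((2 - 3/2*(N2 t - N3 t)^2 + 2*Sp t + 2*sqrt 3*Sm t)*N2 t)) ->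
 (forall t, is_derive N3 t ((2 - 3/2*(N2 t - N3 t)^2 + 2*Sp t - 2*sqrt 3*Sm t)*N3 t)) ->
 (forall t, is_derive Sp t (-3/2*(N2 t - N3 t)^2*(1+Sp t))) ->
 (forall t, is_derive Sm t (-3/2*(N2 t - N3 t)^2*Sm t - 3*sqrt 3/2*(N2 t - N3 t)*(N2 t + N3 t))) ->
 (forall t, Sp t^2 + Sm t^2 + 3/4*(N2 t - N3 t)^2 = 1) ->
 (forall t, 0 < N2 t) -> (forall t, 0 < N3 t) -> 0 < eps ->
 (forall t, -1 + eps <= Sp t) -> Sp 0 < 1 -> False.
Proof.
  intros h2 h3 hp hm hc p2 p3 he hl ha.
  assert (hb : forall t, -1 <= Sp t <= 1).
  { intro t. specialize (hc t). assert (0 <= Sm t ^2) by apply pow2_ge_0. assert (0 <= (N2 t - N3 t)^2) by apply pow2_ge_0. assert (Sp t ^ 2 <= 1) by lra. split; nra. }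
  assert (hmono : forall t, 0 <= t -> Sp t <= Sp 0).
  { intros t ht.
    assert (H := incr_lb (fun t => - Sp t) (fun t => 3/2*(N2 t - N3 t)^2*(1+Sp t)) 0 0 t).
    cbv beta in H.
    enough (0 * (t - 0) <= - Sp t - - Sp 0) by lra.
    apply H; [| lra |].
    - intro t0. eapply is_derive_eq. apply d_opp, hp. req. field.
    - intros t0 _. specialize (hb t0). assert (0 <= (N2 t0 - N3 t0)^2) by apply pow2_ge_0. apply Rmult_le_pos; [apply Rmult_le_pos|]; lra. }
  set (E := fun t => N2 t * N3 t * exp (-(2/eps) * Sp t)).
  assert (hE : forall t, 0 <= t -> E 0 <= E t).
  { intros t ht.
    assert (H := incr_lb E (fun t =>
       (((2 - 3/2*(N2 t - N3 t)^2 + 2*Sp t + 2*sqrt 3*Sm t)*N2 t) * N3 t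
        + N2 t * ((2 - 3/2*(N2 t - N3 t)^2 + 2*Sp t - 2*sqrt 3*Sm t)*N3 t))
         * exp (-(2/eps) * Sp t)
       + N2 t * N3 t * ((-(2/eps)) * (-3/2*(N2 t - N3 t)^2*(1+Sp t)) * exp (-(2/eps) * Sp t)))
       0 0 t).
    enough (0 * (t - 0) <= E t - E 0) by lra.
    apply H; [| lra |].
    - intro t0. unfold E. apply (d_mult (fun t => N2 t * N3 t) (fun t => exp (-(2/eps)*Sp t))). apply (d_mult N2 N3); auto.
      apply (d_exp (fun t => -(2/eps)*Sp t)). apply (is_derive_scal Sp), hp.
    - intros t0 _. cbv beta.
      set (D := N2 t0 - N3 t0). set (e := exp (-(2/eps) * Sp t0)).
      assert (0 < e) by apply exp_pos.
      specialize (hb t0). specialize (hl t0). specialize (p2 t0). specialize (p3 t0).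
      assert (X : 3*D^2 <= 3/eps*D^2*(1+Sp t0)).
      { assert (0 <= D^2) by apply pow2_ge_0.
        replace (3/eps*D^2*(1+Sp t0)) with (3*D^2*((1+Sp t0)/eps)) by (field; lra).
        assert (1 <= (1+Sp t0)/eps) by (apply (Rmult_le_reg_r eps); [lra|]; field_simplify; lra).
        nra. }
      match goal with |- 0 <= ?X => replace X
      with ((N2 t0 * N3 t0 * e) * (4*(1+Sp t0) - 3*D^2 + 3/eps*D^2*(1+Sp t0))) by (field; lra) end.
      assert (0 < N2 t0 * N3 t0 * e) by (apply Rmult_lt_0_compat; [apply Rmult_lt_0_compat|]; lra).
      nra. }
  set (c := E 0 * exp (-(2/eps))).
  assert (hc0 : 0 < c).
  { unfold c, E. apply Rmult_lt_0_compat; [|apply exp_pos].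
    apply Rmult_lt_0_compat; [apply Rmult_lt_0_compat|apply exp_pos]; auto. }
  assert (hP : forall t, 0 <= t -> c <= N2 t * N3 t).
  { intros t ht.
    assert (Q : N2 t * N3 t = E t * exp ((2/eps) * Sp t)).
    { unfold E. rewrite Rmult_assoc, <- exp_plus.
      replace (-(2/eps) * Sp t + 2/eps * Sp t) with 0 by (field; lra). rewrite exp_0; ring. }
    rewrite Q. unfold c.
    apply Rmult_le_compat.
    - unfold E. apply Rlt_le, Rmult_lt_0_compat; [apply Rmult_lt_0_compat|apply exp_pos]; auto.
    - apply Rlt_le, exp_pos.
    - apply hE, ht.
    - apply exp_le. specialize (hb t).
      replace (-(2/eps)) with (2/eps * -1) by (field; lra).
      apply Rmult_le_compat_l; [|lra]. unfold Rdiv; apply Rlt_le, Rmult_lt_0_compat; [lra|].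
      apply Rinv_0_lt_compat; lra. }
  set (m := Rmin 1 (4*c)).
  assert (hm0 : 0 < m) by (unfold m; apply Rmin_pos; lra).
  assert (hS : forall t, 0 <= t -> m <= N2 t + N3 t).
  { intros t ht. specialize (hP t ht). specialize (p2 t). specialize (p3 t).
    destruct (Rle_dec 1 (N2 t + N3 t)).
    - unfold m. apply Rle_trans with 1; [apply Rmin_l|lra].
    - unfold m. apply Rle_trans with (4*c); [apply Rmin_r|].
      assert (0 <= (N2 t - N3 t)^2) by apply pow2_ge_0.
      assert ((N2 t + N3 t)*(N2 t + N3 t) <= N2 t + N3 t).
      { assert (0 <= (N2 t + N3 t)*(1 - (N2 t + N3 t))) by (apply Rmult_le_pos; lra). lra. }
      assert ((N2 t + N3 t)*(N2 t + N3 t) = (N2 t - N3 t)^2 + 4*(N2 t * N3 t)) by ring.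
      lra. }
  set (a := Sp 0).
  set (B := 6 + 3/m + 4/m^2).
  set (k := 2*B/(3*eps)).
  assert (hB : 0 < B).
  { unfold B. assert (0 < /m) by (apply Rinv_0_lt_compat; lra).
    assert (0 < /m^2) by (apply Rinv_0_lt_compat; nra). unfold Rdiv; nra. }
  assert (hk : 0 < k).
  { unfold k. unfold Rdiv. apply Rmult_lt_0_compat; [lra|]. apply Rinv_0_lt_compat; lra. }
  set (F := fun t => Sm t * (N2 t - N3 t) / (N2 t + N3 t) - k * Sp t).
  assert (hF : forall t, 0 <= t -> Rabs (F t) <= 2/m + k).
  { intros t ht. unfold F. specialize (hS t ht). specialize (hb t). specialize (hc t).
    specialize (p2 t). specialize (p3 t).
    assert (0 <= (Sm t - (N2 t - N3 t)/2)^2) by apply pow2_ge_0.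
    assert (0 <= (Sm t + (N2 t - N3 t)/2)^2) by apply pow2_ge_0.
    assert (0 <= (N2 t - N3 t)^2) by apply pow2_ge_0.
    assert (0 <= (Sp t)^2) by apply pow2_ge_0.
    assert (hx : -2 <= Sm t * (N2 t - N3 t) <= 2) by (split; nra).
    assert (hu : 0 < / (N2 t + N3 t) <= / m).
    { split. apply Rinv_0_lt_compat; lra. apply Rinv_le_contravar; lra. }
    assert (hv : Rabs (Sm t * (N2 t - N3 t) / (N2 t + N3 t)) <= 2 / m).
    { unfold Rdiv. rewrite Rabs_mult. rewrite (Rabs_pos_eq (/ _)) by lra.
      apply Rmult_le_compat; [apply Rabs_pos|lra| |lra].
      apply Rabs_le; lra. }
    eapply Rle_trans; [apply Rabs_triang|]. rewrite Rabs_Ropp, Rabs_mult.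
    rewrite (Rabs_pos_eq k) by lra.
    assert (Rabs (Sp t) <= 1) by (apply Rabs_le; lra). nra. }
  set (T := (4/m + 2*k + 1) / (2*((1-a)*eps))).
  assert (hT : 0 < T).
  { unfold T. unfold a. assert (0 < /m) by (apply Rinv_0_lt_compat; lra).
    apply Rdiv_lt_0_compat; [unfold Rdiv; lra|]. nra. }
  assert (H := incr_lb F (fun t =>
    ((( -3/2*(N2 t-N3 t)^2*Sm t - 3*sqrt 3/2*(N2 t-N3 t)*(N2 t+N3 t)) * (N2 t-N3 t)
     + Sm t*((2 - 3/2*(N2 t-N3 t)^2 + 2*Sp t + 2*sqrt 3*Sm t)*N2 t - (2 - 3/2*(N2 t-N3 t)^2 + 2*Sp t - 2*sqrt 3*Sm t)*N3 t))*(N2 t+N3 t)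
    - Sm t*(N2 t-N3 t)*((2 - 3/2*(N2 t-N3 t)^2 + 2*Sp t + 2*sqrt 3*Sm t)*N2 t + (2 - 3/2*(N2 t-N3 t)^2 + 2*Sp t - 2*sqrt 3*Sm t)*N3 t))
   / (N2 t+N3 t)^2
  - k * (-3/2*(N2 t-N3 t)^2*(1+Sp t))) (2*((1-a)*eps)) 0 T).
  assert (X : 2*((1-a)*eps) * (T - 0) <= F T - F 0).
  { apply H; [| lra |].
    - intro t. unfold F.
      apply (d_minus (fun t => Sm t * (N2 t - N3 t) / (N2 t + N3 t)) (fun t => k * Sp t));
        [|apply (is_derive_scal Sp), hp].
      apply (is_derive_div (fun t => Sm t * (N2 t - N3 t)) (fun t => N2 t + N3 t)).
      + apply (d_mult Sm (fun t => N2 t - N3 t)); [apply hm|]. apply (d_minus N2 N3); auto.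
      + apply (d_plus N2 N3); auto.
      + specialize (p2 t); specialize (p3 t); lra.
    - intros t [ht1 ht2]. unfold k, B.
      apply keyineq; auto. }
  assert (Y : F T - F 0 <= 2*(2/m + k)).
  { assert (h1 := hF T (Rlt_le _ _ hT)). assert (h0 := hF 0 (Rle_refl 0)).
    apply Rabs_le_between in h1. apply Rabs_le_between in h0. lra. }
  replace (2*((1-a)*eps) * (T - 0)) with (4/m + 2*k + 1) in X.
  lra. unfold T. field. split; [lra|]. unfold a; lra.
Qed.
Lemma sq_lt x e : 0 < e -> x^2 < e^2 -> Rabs x < e.
Proof. intros he h. destruct (Rlt_le_dec (Rabs x) e) as [|H]; auto.
  assert (H2 : e^2 <= Rabs x ^2) by (apply pow_incr; lra). rewrite pow2_abs in H2. lra. Qed.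
Lemma sq0 x : x^2 = 0 -> x = 0.
Proof. intros h. apply Rsqr_0_uniq. unfold Rsqr. rewrite <- h. ring. Qed.

Lemma sp_mono (N2 N3 Sp : R -> R) :
 (forall t, is_derive Sp t (-3/2*(N2 t - N3 t)^2*(1+Sp t))) ->
 (forall t, -1 <= Sp t <= 1) -> forall t0 t, t0 <= t -> Sp t <= Sp t0.
Proof.
  intros hp hb t0 t ht.
  assert (H := incr_lb (fun t => - Sp t) (fun t => 3/2*(N2 t - N3 t)^2*(1+Sp t)) 0 t0 t).
  cbv beta in H.
  enough (0 * (t - t0) <= - Sp t - - Sp t0) by lra.
  apply H; [| lra |].
  - intro t1. eapply is_derive_eq. apply d_opp, hp. req. field.
  - intros t1 _. specialize (hb t1). assert (0 <= (N2 t1 - N3 t1)^2) by apply pow2_ge_0.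
    apply Rmult_le_pos; [apply Rmult_le_pos|]; lra.
Qed.

Theorem mainTheorem8 (N1 N2 N3 Sp Sm : R -> R) :
  WH_solution N1 N2 N3 Sp Sm ->
  WH_constraint N1 N2 N3 Sp Sm ->
  (forall t, N1 t = 0) ->
  (forall t, 0 < N2 t) ->
  (forall t, 0 < N3 t) ->
  (forall t, ~ (N2 t = N3 t /\ Sm t = 0)) ->
  is_lim Sp p_infty (-1) /\
  is_lim Sm p_infty 0 /\
  is_lim (fun t => N2 t - N3 t) p_infty 0.
Proof.
  intros Hsol Hcon H1 p2 p3 Hne.
  assert (hc : forall t, Sp t^2 + Sm t^2 + 3/4*(N2 t - N3 t)^2 = 1).
  { intro t. assert (h := Hcon t). rewrite H1 in h. rewrite <- h. field. }
  assert (hq : forall t, WH_q (Sp t) (Sm t) = 2 - 3/2*(N2 t - N3 t)^2).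
  { intro t. unfold WH_q. specialize (hc t). lra. }
  assert (h2 : forall t, is_derive N2 t ((2 - 3/2*(N2 t - N3 t)^2 + 2*Sp t + 2*sqrt 3*Sm t)*N2 t)).
  { intro t. destruct (Hsol t) as [_ [X _]]. rewrite hq in X. exact X. }
  assert (h3 : forall t, is_derive N3 t ((2 - 3/2*(N2 t - N3 t)^2 + 2*Sp t - 2*sqrt 3*Sm t)*N3 t)).
  { intro t. destruct (Hsol t) as [_ [_ [X _]]]. rewrite hq in X. exact X. }
  assert (hp : forall t, is_derive Sp t (-3/2*(N2 t - N3 t)^2*(1+Sp t))).
  { intro t. destruct (Hsol t) as [_ [_ [_ [X _]]]]. rewrite hq, H1 in X.
    eapply is_derive_eq; [exact X|]. unfold WH_Splus. req. field. }
  assert (hm : forall t, is_derive Sm t (-3/2*(N2 t - N3 t)^2*Sm t - 3*sqrt 3/2*(N2 t - N3 t)*(N2 t + N3 t))).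
  { intro t. destruct (Hsol t) as [_ [_ [_ [_ X]]]]. rewrite hq, H1 in X.
    eapply is_derive_eq; [exact X|]. unfold WH_Sminus. req. field. }
  assert (hb : forall t, -1 <= Sp t <= 1).
  { intro t. specialize (hc t). assert (0 <= Sm t ^2) by apply pow2_ge_0.
    assert (0 <= (N2 t - N3 t)^2) by apply pow2_ge_0. assert (Sp t ^ 2 <= 1) by lra. split; nra. }
  assert (ha : Sp 0 < 1).
  { destruct (Rlt_le_dec (Sp 0) 1) as [|h]; auto. exfalso.
    assert (e1 : Sp 0 = 1) by (specialize (hb 0); lra).
    specialize (hc 0). rewrite e1 in hc.
    assert (0 <= Sm 0 ^2) by apply pow2_ge_0.
    assert (0 <= (N2 0 - N3 0)^2) by apply pow2_ge_0.
    assert (E1 : Sm 0 ^ 2 = 0) by lra. assert (E2 : (N2 0 - N3 0)^2 = 0) by lra.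
    apply (Hne 0). apply sq0 in E1. apply sq0 in E2. split; lra. }
  assert (L : forall eps, 0 < eps -> exists M, forall t, M < t -> Sp t < -1 + eps).
  { intros eps he.
    destruct (classic (exists t0, Sp t0 < -1 + eps)) as [[t0 Ht0]|Hn].
    - exists t0. intros t ht. assert (Sp t <= Sp t0) by (apply (sp_mono N2 N3); auto; lra). lra.
    - exfalso. apply (core N2 N3 Sp Sm eps); auto.
      intro t. destruct (Rlt_le_dec (Sp t) (-1 + eps)) as [h|h]; auto.
      exfalso; apply Hn; exists t; exact h. }
  split; [|split]; apply is_lim_spec; simpl; intro eps.
  - destruct (L eps (cond_pos eps)) as [M HM]. exists M. intros t ht.
    specialize (HM t ht). specialize (hb t). apply Rabs_def1; lra.
  - assert (he : 0 < eps) by apply cond_pos.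
    destruct (L (eps^2/4)) as [M HM]. { assert (0 < eps^2) by (apply pow_lt; lra). lra. }
    exists M. intros t ht. specialize (HM t ht). specialize (hb t). specialize (hc t).
    rewrite Rminus_0_r. apply sq_lt; auto.
    assert (0 <= (N2 t - N3 t)^2) by apply pow2_ge_0.
    assert (1 - Sp t^2 <= 2*(1 + Sp t)) by nra. lra.
  - assert (he : 0 < eps) by apply cond_pos.
    destruct (L (eps^2/4)) as [M HM]. { assert (0 < eps^2) by (apply pow_lt; lra). lra. }
    exists M. intros t ht. specialize (HM t ht). specialize (hb t). specialize (hc t).
    rewrite Rminus_0_r. apply sq_lt; auto.
    assert (0 <= Sm t^2) by apply pow2_ge_0.
    assert (1 - Sp t^2 <= 2*(1 + Sp t)) by nra.
    assert (0 < eps^2) by (apply pow_lt; lra). lra.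
Qed.
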